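(* Let $T,M,\delta,\tau$ be as in the setup, let $\xi>0$, $\varepsilon\in(0,1)$, $\eta\in(0,1)$ and an integer $J\ge1$. Consider the following randomized procedure (HybridPeel). Set $W_1=V_T$. For $i=1,\dots,J$, as long as $W_i\neq\emptyset$: random estimates $\hat C_i(w)\ge0$ for all $w\in W_i$ are produced; set $\hat\tau(W_i)=\frac1k\sum_{w\in W_i}\hat C_i(w)$, $L_i=\{w\in W_i:\hat C_i(w)\le k(1+\xi)\hat\tau(W_i)/|W_i|\}$ and $W_{i+1}=W_i\setminus L_i$. Then run the Greedy peeling procedure on $T[W_{J+1}]$ (if $W_{J+1}$ is nonempty): starting from $U_0=W_{J+1}$, repeatedly remove a vertex of minimum temporal motif degree $C_{U}(\cdot)$ in the current set $U$ (ties broken arbitrarily) until $k$ vertices remain, and let $W'$ be a set of maximum density $\rho$ among all sets visited in this phase. Output the set among the candidates $W_1,\dots,W_J$ (each scored by $\hat\tau(W_j)/|W_j|$) and $W'$ (scored by $\rho(W')$) with the largest score. Assume that for every $i\le J$, conditionally on everything before iteration $i$, the event $\{\,|\hat C_i(w)-C_{W_i}(w)|\le\varepsilon\,C_{W_i}(w)\text{ for all }w\in W_i\,\}$ has probability at least $1-\eta/J$. Then with probability at least $1-\eta$ the output $W$ satisfies $\rho(W)\ge\frac{(1-\varepsilon)^2}{k(1+\xi)(1+\varepsilon)^2}\mathrm{OPT}$ when $J\ge2$, and $\rho(W)\ge\frac{(1-\varepsilon)^2}{k(1+\xi)(1+\varepsilon)}\mathrm{OPT}$ when $J=1$.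
   Context: Setup. A temporal network is a pair $T=(V_T,E_T)$ where $V_T$ is a finite set of $n$ vertices and $E_T$ is a finite set of temporal edges $(u,v,t)$ with $u,v\in V_T$ and timestamp $t\in\mathbb{R}_{>0}$; timestamps are assumed distinct. A $k$-vertex $\ell$-edge temporal motif ($k,\ell\ge 2$) is a pair $M=(K,\sigma)$ where $K=(V_K,E_K)$ is a directed, weakly connected multigraph with $|V_K|=k$, $|E_K|=\ell$, and $\sigma$ is an ordering of $E_K$; equivalently $M$ is the sequence $\langle(x_1,y_1),\dots,(x_\ell,y_\ell)\rangle$ of its edges in the order $\sigma$. Given $\delta>0$, a $\delta$-instance of $M$ in a temporal network is a sequence $S=\langle(x'_1,y'_1,t'_1),\dots,(x'_\ell,y'_\ell,t'_\ell)\rangle$ of $\ell$ distinct temporal edges of that network with $t'_1<\dots<t'_\ell$ such that (1) there is a bijection $h$ from the set of vertices appearing in $S$ onto $V_K$ with $h(x'_i)=x_i$ and $h(y'_i)=y_i$ for all $i\in[\ell]$, and (2) $t'_\ell-t'_1\le\delta$. We write $v\in S$ if $v$ is an endpoint of some edge of $S$; every $\delta$-instance contains exactly $k$ vertices. For $W\subseteq V_T$, $T[W]=(W,\{(u,v,t)\in E_T:u,v\in W\})$ is the induced temporal subnetwork and $\mathcal{S}_W$ is the set of $\delta$-instances of $M$ in $T[W]$. A weighting function $\tau$ assigns a weight $\tau(S)>0$ to each $\delta$-instance $S$ of $M$ in $T$; for $W\subseteq V_T$, $\tau(W)=\sum_{S\in\mathcal{S}_W}\tau(S)$. The temporal motif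 degree of $v$ in $T[W]$ is $C_W(v)=\sum_{S\in\mathcal{S}_W:\,v\in S}\tau(S)$. The density of a nonempty $W\subseteq V_T$ is $\rho(W)=\tau(W)/|W|$, and $\mathrm{OPT}=\max_{\emptyset\ne W\subseteq V_T}\rho(W)$ is the optimal value of the Temporal Motif Densest Subnetwork (TMDS) problem. *)

(* Defs.v *)
From HB Require Import structures.
From mathcomp Require Import all_boot all_order all_algebra.
From mathcomp Require Import all_classical all_reals all_analysis.
Set Implicit Arguments.
Unset Strict Implicit.
Unset Printing Implicit Defensive.
Import Order.TTheory GRing.Theory Num.Theory.
Local Open Scope ring_scope.

(* Temporal network T = (V, E_T): vertex set is the finType V; the     *)
(* temporal edges are indexed by 'I_m : edge e is (src e, dst e, time e)*)
(* (distinct timestamps, i.e. time injective, is a hypothesis).        *)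
(* Motif M: vertex set 'I_k, edges (mx i, my i) for i : 'I_l in the    *)
(* order sigma.  A candidate delta-instance is a map s : 'I_l -> 'I_m   *)
(* (its i-th temporal edge is edge s i).                               *)

Section TMDS.
Variables (R : realType) (V : finType) (m : nat).
Variables (src dst : 'I_m -> V) (time : 'I_m -> R).
Variables (k l : nat) (mx my : 'I_l -> 'I_k) (delta : R).

Definition motif_adj : rel 'I_k :=
  fun a b => [exists i : 'I_l, ((mx i == a) && (my i == b)) ||
                               ((mx i == b) && (my i == a))].

Definition motif_weakly_connected : Prop :=
  forall a b : 'I_k, connect motif_adj a b.

Definition in_inst (s : {ffun 'I_l -> 'I_m}) (v : V) : bool :=
  [exists i : 'I_l, (src (s i) == v) || (dst (s i) == v)].

Definition is_instance (s : {ffun 'I_l -> 'I_m}) : Prop :=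
  [/\ (forall i j : 'I_l, (i < j)%N -> time (s i) < time (s j)),
      (exists h : V -> 'I_k,
         [/\ forall i : 'I_l, h (src (s i)) = mx i /\ h (dst (s i)) = my i,
             {in in_inst s &, injective h} &
             forall a : 'I_k, exists2 v, in_inst s v & h v = a]) &
      (forall i j : 'I_l, val i = 0%N -> val j = l.-1 ->
          time (s j) - time (s i) <= delta)].

Definition inst_in (W : {set V}) (s : {ffun 'I_l -> 'I_m}) : Prop :=
  is_instance s /\ (forall i : 'I_l, src (s i) \in W /\ dst (s i) \in W).

Variable tau : {ffun 'I_l -> 'I_m} -> R.

Definition tauW (W : {set V}) : R :=
  \sum_(s : {ffun 'I_l -> 'I_m} | `[< inst_in W s >]) tau s.

Definition Cdeg (W : {set V}) (v : V) : R :=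
  \sum_(s : {ffun 'I_l -> 'I_m} | `[< inst_in W s >] && in_inst s v) tau s.

Definition rho (W : {set V}) : R := tauW W / #|W|%:R.

(* OPT = max over nonempty W of rho W (all rho W >= 0, so 0 is a
   harmless initial value of the max) *)
Definition OPT : R := \big[Num.max/0]_(W : {set V} | W != finset.set0) rho W.

Variables (xi eps : R) (J : nat).

Definition tau_hat (W : {set V}) (e : V -> R) : R :=
  (k%:R)^-1 * \sum_(w in W) e w.

Definition Lset (W : {set V}) (e : V -> R) : {set V} :=
  [set w in W | e w <= k%:R * (1 + xi) * tau_hat W e / #|W|%:R].

(* est i = estimates hat C_i produced in iteration i (i >= 1).
   Wp est i = W_i for i >= 1  (Wp est 0 is an unused dummy). *)
Fixpoint Wp (est : nat -> V -> R) (i : nat) : {set V} :=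
  match i with
  | 0 => [set: V]
  | j.+1 => if j is 0 then [set: V] else Wp est j :\: Lset (Wp est j) (est j)
  end.

Definition score (est : nat -> V -> R) (j : nat) : R :=
  tau_hat (Wp est j) (est j) / #|Wp est j|%:R.

Definition greedy_step : rel {set V} :=
  fun U U' => (k < #|U|)%N &&
    [exists v in U, [forall u in U, Cdeg U v <= Cdeg U u] && (U' == U :\ v)].

Definition greedy_run (U0 : {set V}) (us : seq {set V}) : bool :=
  path greedy_step U0 us && (#|last U0 us| <= k)%N.

(* Wg = None  : W_{J+1} empty, Greedy not run;
   Wg = Some W' : W' is a maximum-density set visited by Greedy *)
Definition greedy_result (est : nat -> V -> R) (Wg : option {set V}) : Prop :=
  match Wg with
  | None => Wp est J.+1 = finset.set0
  | Some W' => Wp est J.+1 != finset.set0 /\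
      exists us, [/\ greedy_run (Wp est J.+1) us,
                     W' \in Wp est J.+1 :: us &
                     forall U, U \in Wp est J.+1 :: us -> rho U <= rho W']
  end.

(* W_j is an actual candidate: iteration j was executed *)
Definition iter_cand (est : nat -> V -> R) (j : nat) : Prop :=
  (1 <= j <= J)%N /\ Wp est j != finset.set0.

(* W is a possible output of HybridPeel given the estimates est
   (for some resolution of the ties) *)
Definition is_output (est : nat -> V -> R) (W : {set V}) : Prop :=
  exists Wg, greedy_result est Wg /\
    let ok (x : R) := (forall j, iter_cand est j -> score est j <= x) /\
                      (forall W', Wg = Some W' -> rho W' <= x) in
    (exists j, [/\ iter_cand est j, W = Wp est j & ok (score est j)]) \/
    (Wg = Some W /\ ok (rho W)).

Definition good_iter (est : nat -> V -> R) (i : nat) : Prop :=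
  forall w, w \in Wp est i ->
    `|est i w - Cdeg (Wp est i) w| <= eps * Cdeg (Wp est i) w.

End TMDS.

(* Main.v *)
Require Import Defs.
From HB Require Import structures.
From mathcomp Require Import all_boot all_order all_algebra.
From mathcomp Require Import all_classical all_reals all_analysis.
From mathcomp Require Import ring lra.
Import Order.TTheory GRing.Theory Num.Theory.
Local Open Scope ring_scope.
Set Implicit Arguments. Unset Strict Implicit.

Section Det.
Variables (R : realType) (V : finType) (m : nat).
Variables (src dst : 'I_m -> V) (time : 'I_m -> R).
Variables (k l : nat) (mx my : 'I_l -> 'I_k) (delta : R).
Variable tau : {ffun 'I_l -> 'I_m} -> R.
Hypothesis tau_pos : forall s, is_instance src dst time mx my delta s -> 0 < tau s.
Hypothesis l0 : (0 < l)%N.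

Local Notation tW := (tauW src dst time mx my delta tau).
Local Notation C := (Cdeg src dst time mx my delta tau).
Local Notation rh := (rho src dst time mx my delta tau).
Local Notation opt := (OPT src dst time mx my delta tau).
Local Notation II := (inst_in src dst time mx my delta).

Lemma sum_mono (I : finType) (P Q : pred I) (F : I -> R) :
  (forall s, P s -> Q s) -> (forall s, Q s -> 0 <= F s) ->
  \sum_(s | P s) F s <= \sum_(s | Q s) F s.
Proof.
move=> PQ F0; rewrite [X in _ <= X](bigID P) /= ler_wpDr //.
  by apply: sumr_ge0 => s /andP[/F0].
rewrite [X in _ <= X](eq_bigl P) // => s; apply/andP/idP => [[]//|Ps].
by split=> //; apply: PQ.
Qed.

Lemma inst_tau_ge0 (W : {set V}) s : `[< II W s >] -> 0 <= tau s.
Proof. by move/asboolP=> [/tau_pos/ltW]. Qed.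

Lemma tauW_ge0 (W : {set V}) : 0 <= tW W.
Proof. by apply: sumr_ge0 => s /inst_tau_ge0. Qed.

Lemma Cdeg_ge0 (W : {set V}) v : 0 <= C W v.
Proof. by apply: sumr_ge0 => s /andP[/inst_tau_ge0]. Qed.

Lemma rho_ge0 (W : {set V}) : 0 <= rh W.
Proof. by rewrite /rho divr_ge0 // tauW_ge0. Qed.

Lemma inst_sub (W W' : {set V}) s : W \subset W' -> II W s -> II W' s.
Proof.
move=> /fintype.subsetP sWW' [Hi Hw]; split=> // i; have [h1 h2] := Hw i.
by split; apply: sWW'.
Qed.

Lemma tauW_mono (W W' : {set V}) : W \subset W' -> tW W <= tW W'.
Proof.
move=> sW; apply: sum_mono; last by move=> s /inst_tau_ge0.
by move=> s /asboolP H; apply/asboolP; apply: inst_sub H.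
Qed.

Lemma Cdeg_mono (W W' : {set V}) v : W \subset W' -> C W v <= C W' v.
Proof.
move=> sW; apply: sum_mono; last by move=> s /andP[/inst_tau_ge0].
move=> s /andP[/asboolP H ->]; rewrite andbT; apply/asboolP; exact: inst_sub H.
Qed.

Lemma card_inst s : is_instance src dst time mx my delta s ->
  (#|[set v | in_inst src dst s v]| <= k)%N.
Proof.
move=> [_ [h [_ hinj _]] _].
rewrite -(card_in_imset (f := h)); last first.
  by move=> x y; rewrite !inE => hx hy; apply: hinj.
by apply: leq_trans (max_card _) _; rewrite card_ord.
Qed.

Lemma sum_Cdeg (W : {set V}) : \sum_(w in W) C W w <= k%:R * tW W.
Proof.
rewrite /Cdeg /tauW.
under eq_bigr do rewrite big_mkcond /=.
rewrite exchange_big /= mulr_sumr [X in _ <= X]big_mkcond /=.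
apply: ler_sum => s _; case: asboolP => H; last first.
  by rewrite big1 // => w _; rewrite andFb.
rewrite (eq_bigr (fun w => if in_inst src dst s w then tau s else 0)); last first.
  by move=> w _; rewrite andTb.
rewrite -big_mkcondr /=.
have t0 : 0 <= tau s by exact: (@inst_tau_ge0 W s (asboolT H)).
apply: (le_trans (@sum_mono V (fun w => (w \in W) && in_inst src dst s w) (in_inst src dst s) (fun _ => tau s) _ _)).
- by move=> w /andP[].
- by move=> w _.
rewrite (eq_bigl (fun w => w \in [set v | in_inst src dst s v])); last first.
  by move=> w; rewrite inE.
rewrite sumr_const -[tau s *+ _]mulr_natl; apply: (ler_wpM2r t0); rewrite ler_nat.
by case: H => H _; exact: card_inst H.
Qed.

Lemma tauW_set0 : tW finset.set0 = 0.
Proof.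
rewrite /tauW big_pred0 // => s; apply/asboolP => -[_ H].
by have [] := H (Ordinal l0); rewrite inE.
Qed.

Lemma tauW_split (W : {set V}) v : tW W = tW (W :\ v) + C W v.
Proof.
rewrite /tauW /Cdeg (bigID (fun s => in_inst src dst s v)) /= addrC; congr (_ + _).
apply: eq_bigl => s; apply/andP/asboolP.
- move=> [/asboolP [Hi Hw] Hn]; split=> // i; have [h1 h2] := Hw i.
  by split; rewrite !inE ?h1 ?h2 andbT; apply: contra Hn => /eqP e;
    apply/existsP; exists i; rewrite e eqxx ?orbT.
- move=> [Hi Hw]; split.
  + apply/asboolP; split=> // i; have [] := Hw i; rewrite !inE => /andP[_ ->] /andP[_ ->].
    by [].
  + apply/negP => /existsP [i /orP [] /eqP e]; have [] := Hw i; rewrite !inE e eqxx //.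
Qed.

Lemma maxr_cases (x y : R) : Num.max x y = x \/ Num.max x y = y.
Proof. unfold Num.Def.maxr; case: (_ < _); auto. Qed.

Lemma rho_le_opt (W : {set V}) : W != finset.set0 -> rh W <= opt.
Proof.
move=> W0; rewrite /OPT.
exact: (le_bigmax_cond _ (fun W => rh W) W0).
Qed.

Lemma opt_ge0 : 0 <= opt.
Proof.
rewrite /OPT; elim/big_rec: _ => // W x _ Hx.
by case: (maxr_cases (rh W) x) => ->; rewrite ?rho_ge0.
Qed.

Lemma opt_attained : 0 < opt -> exists W, W != finset.set0 /\ rh W = opt.
Proof.
rewrite /OPT; elim/big_rec: _ => [|W x HW IH]; first by rewrite ltxx.
case: (maxr_cases (rh W) x) => -> h; first by exists W.
exact: IH.
Qed.

Lemma div_le (a b c d : R) : 0 < b -> 0 < d -> a * d <= c * b -> a / b <= c / d.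
Proof. by move=> b0 d0 h; rewrite ler_pdivrMr // mulrAC ler_pdivlMr. Qed.

Lemma card_pos (W : {set V}) : W != finset.set0 -> 0 < #|W|%:R :> R.
Proof. by rewrite -card_gt0 ltr0n. Qed.

Lemma tauW_opt (Ws : {set V}) : Ws != finset.set0 -> rh Ws = opt ->
  tW Ws = opt * #|Ws|%:R.
Proof.
move=> W0 <-; rewrite /rho divfK //; exact/lt0r_neq0/card_pos.
Qed.

Lemma key_deg (Ws : {set V}) v : Ws != finset.set0 -> rh Ws = opt ->
  v \in Ws -> opt <= C Ws v.
Proof.
move=> W0 Hr vW.
have HT := tauW_opt W0 Hr.
have HN : #|Ws|%:R = 1 + #|Ws :\ v|%:R :> R by rewrite (cardsD1 v Ws) vW natrD.
have HT' : tW (Ws :\ v) <= opt * #|Ws :\ v|%:R.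
  have [->|ne] := eqVneq (Ws :\ v) finset.set0.
    by rewrite tauW_set0 cards0 mulr0.
  by have := rho_le_opt ne; rewrite /rho ler_pdivrMr // card_pos.
have := tauW_split Ws v; rewrite HT HN => e.
nra.
Qed.

Lemma step_good (Ws U : {set V}) v : (0 < k)%N -> Ws != finset.set0 -> rh Ws = opt ->
  Ws \subset U -> v \in Ws -> v \in U -> (forall u, u \in U -> C U v <= C U u) ->
  opt / k%:R <= rh U.
Proof.
move=> k0 W0 Hr sWU vW vU Hmin.
have o1 : opt <= C U v := le_trans (key_deg W0 Hr vW) (Cdeg_mono v sWU).
have U0 : U != finset.set0 by apply/set0Pn; exists v.
have s1 : C U v *+ #|U| <= k%:R * tW U.
  have h : \sum_(u in U) C U v <= \sum_(u in U) C U u by exact: ler_sum.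
  rewrite sumr_const in h; exact: (le_trans h (sum_Cdeg U)).
rewrite /rho; apply: div_le; [by rewrite ltr0n | exact: card_pos |].
rewrite -mulr_natr in s1.
have N0 : 0 <= #|U|%:R :> R by [].
nra.
Qed.

Lemma greedy_good (Ws : {set V}) : (0 < k)%N -> Ws != finset.set0 -> rh Ws = opt ->
  forall (us : seq {set V}) (U0 : {set V}), Ws \subset U0 ->
  path (greedy_step src dst time mx my delta tau) U0 us ->
  (#|last U0 us| <= k)%N ->
  exists2 U, U \in U0 :: us & opt / k%:R <= rh U.
Proof.
move=> k0 W0 Hr; elim=> [|U1 us IH] U0 sWU /=.
  move=> _ hk; exists U0; first by rewrite inE.
  have U0n : U0 != finset.set0.
    by apply: contraNneq W0 => e; rewrite -finset.subset0 -e.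
  rewrite /rho; apply: div_le; [by rewrite ltr0n | exact: card_pos |].
  have o0 := opt_ge0.
  have h1 : opt <= tW U0.
    apply: le_trans (tauW_mono sWU); rewrite (tauW_opt W0 Hr).
    by rewrite ler_peMr // ler1n card_gt0.
  have h2 : #|U0|%:R <= k%:R :> R by rewrite ler_nat.
  have K0 : 0 <= k%:R :> R by [].
  nra.
move=> /andP [/andP [_ /existsP [v /andP [vU /andP [/forallP Hmin /eqP e]]]] Hp] hk.
have Hmin' : forall u, u \in U0 -> C U0 v <= C U0 u.
  by move=> u uU; have := Hmin u; rewrite uU.
have [vW|vW] := boolP (v \in Ws).
  by exists U0; [rewrite inE eqxx | exact: step_good vW vU Hmin'].
have sWU1 : Ws \subset U1.
  rewrite e; apply/fintype.subsetP => x xW; rewrite !inE (fintype.subsetP sWU) // andbT.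
  by apply: contraNneq vW => <-.
have [U HU HU'] := IH U1 sWU1 Hp hk.
by exists U => //; rewrite inE HU orbT.
Qed.

Lemma good_bounds (xi eps : R) est i w : good_iter src dst time mx my delta tau xi eps est i ->
  w \in Wp k xi est i ->
  (1 - eps) * C (Wp k xi est i) w <= est i w /\ est i w <= (1 + eps) * C (Wp k xi est i) w.
Proof.
move=> g wW; have := g w wW; rewrite ler_distl => /andP[h1 h2]; split; lra.
Qed.

Lemma score_upper (xi eps : R) est j : (0 < k)%N -> 0 <= eps ->
  good_iter src dst time mx my delta tau xi eps est j ->
  Wp k xi est j != finset.set0 ->
  score k xi est j <= (1 + eps) * rh (Wp k xi est j).
Proof.
move=> k0 e0 g ne; rewrite /score /rho /tau_hat mulrA.
have Np := card_pos ne.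
rewrite ler_pM2r ?invr_gt0 //.
have K0 : 0 < k%:R :> R by rewrite ltr0n.
set W := Wp k xi est j.
have h1 : \sum_(w in W) est j w <= (1 + eps) * \sum_(w in W) C W w.
  rewrite mulr_sumr; apply: ler_sum => w wW.
  by have [] := good_bounds g wW.
have h3 : (1 + eps) * \sum_(w in W) C W w <= (1 + eps) * (k%:R * tW W).
  by apply: ler_wpM2l; [lra | exact: sum_Cdeg].
rewrite mulrC ler_pdivrMr //; lra.
Qed.

Lemma score_lower (xi eps : R) est i (Ws : {set V}) v : (0 < k)%N -> 0 < xi -> 0 <= eps <= 1 ->
  Ws != finset.set0 -> rh Ws = opt ->
  good_iter src dst time mx my delta tau xi eps est i ->
  Ws \subset Wp k xi est i -> v \in Ws -> v \in Lset k xi (Wp k xi est i) (est i) ->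
  (1 - eps) * opt / (k%:R * (1 + xi)) <= score k xi est i.
Proof.
move=> k0 x0 /andP[e0 e1] W0 Hr g sW vW.
rewrite inE => /andP[vWi hv].
have K0 : 0 < k%:R :> R by rewrite ltr0n.
have K1 : 0 < k%:R * (1 + xi) by apply: mulr_gt0 => //; lra.
have [gl _] := good_bounds g vWi.
have o1 : opt <= C (Wp k xi est i) v := le_trans (key_deg W0 Hr vW) (Cdeg_mono v sW).
have o2 : (1 - eps) * opt <= (1 - eps) * C (Wp k xi est i) v.
  by apply: ler_wpM2l => //; lra.
rewrite ler_pdivrMr // /score mulrC.
rewrite -mulrA in hv.
lra.
Qed.

Lemma trajectory (xi : R) est (Ws : {set V}) n :
  (exists i, [/\ (1 <= i <= n)%N, Ws \subset Wp k xi est i &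
      exists2 v, v \in Ws & v \in Lset k xi (Wp k xi est i) (est i)])
  \/ Ws \subset Wp k xi est n.+1.
Proof.
elim: n => [|n [[i [hi h1 h2]]|IH]]; first by right; exact: finset.subsetT.
- by left; exists i; split => //; case/andP: hi => -> /= h; exact: leqW.
case: (pickP [pred v | (v \in Ws) && (v \in Lset k xi (Wp k xi est n.+1) (est n.+1))]) => [v /andP[vW vL]|none].
  by left; exists n.+1; split => //; [rewrite leqnn | exists v].
right; rewrite [Wp _ _ _ n.+2]/=; apply/fintype.subsetP => x xW.
rewrite inE (fintype.subsetP IH) // andbT.
by apply/negP => xL; have := none x; rewrite /= xW xL.
Qed.

Lemma det_main (xi eps : R) (J : nat) est (Out : {set V}) :
  (0 < k)%N -> 0 < xi -> 0 < eps < 1 ->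
  (forall i, (1 <= i <= J)%N -> good_iter src dst time mx my delta tau xi eps est i) ->
  is_output src dst time mx my delta tau xi J est Out ->
  (1 - eps) / (k%:R * (1 + xi) * (1 + eps)) * opt <= rh Out.
Proof.
move=> k0 x0 /andP[e0 e1] good [Wg [Hg Hout]].
have K0 : 0 < k%:R :> R by rewrite ltr0n.
have c0p : 0 <= (1 - eps) / (k%:R * (1 + xi) * (1 + eps)).
  apply: divr_ge0; first lra.
  by apply: mulr_ge0; [apply: mulr_ge0 |]; lra.
have [oP|oN] := lerP opt 0.
  apply: le_trans (rho_ge0 Out); exact: mulr_ge0_le0.
have [Ws [W0 Hr]] := opt_attained oN.
set q := (1 - eps) / (k%:R * (1 + xi) * (1 + eps)) * opt.
set LB := (1 - eps) * opt / (k%:R * (1 + xi)).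
have F1 : q * (1 + eps) = LB.
  rewrite /q /LB; field.
  by rewrite !lt0r_neq0 //; lra.
have F2 : LB <= opt / k%:R.
  rewrite /LB ler_pdivrMr ?mulr_gt0 //; last lra.
  rewrite mulrA divfK ?lt0r_neq0 //.
  have : 0 <= opt * xi + eps * opt by apply: addr_ge0; apply: mulr_ge0; lra.
  nra.
have q0 : 0 <= q by apply: mulr_ge0 => //; exact: ltW.
have fin : forall r, q * (1 + eps) <= (1 + eps) * r -> q <= r.
  by move=> r h; nra.
have [[i [hi sW [v vW vL]]]|sW] := trajectory xi est Ws J.
  have ci : iter_cand k xi J est i.
    split => //; apply/set0Pn; exists v; exact: (fintype.subsetP sW).
  have lb := score_lower k0 x0 (eps:=eps) (ltac:(rewrite !ltW //)) W0 Hr (good i hi) sW vW vL.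
  rewrite -/LB in lb.
  case: Hout => [[j [cj -> [okj _]]]|[eW [ok1 _]]].
    have u := score_upper k0 (ltW e0) (good j (proj1 cj)) (proj2 cj).
    have h := okj i ci; apply: fin; lra.
  have := ok1 i ci; nra.
case: Wg Hg Hout => [W'|]; last first.
  move=> e; exfalso; move: W0; rewrite e finset.subset0 in sW; by rewrite sW.
move=> [ne [us [/andP[Hp Hk] HW' Hmax]]] Hout.
have [U HU HU'] := greedy_good k0 W0 Hr sW Hp Hk.
have hW' := le_trans HU' (Hmax U HU).
case: Hout => [[j [cj -> [_ okj]]]|[[eW] [_ _]]].
  have u := score_upper k0 (ltW e0) (good j (proj1 cj)) (proj2 cj).
  have h := okj W' erefl; apply: fin; lra.
rewrite -eW; nra.
Qed.
End Det.
Section Meas.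
Context d (Omega : measurableType d).
Local Open Scope classical_set_scope.

Definition MB (b : Omega -> bool) := measurable [set om | b om].

Lemma MB_ext (a b : Omega -> bool) : (forall om, a om = b om) -> MB a -> MB b.
Proof. by move=> e; rewrite /MB (_ : [set om | b om] = [set om | a om]) //; apply/seteqP; split => om /=; rewrite e. Qed.

Lemma MB_const (c : bool) : MB (fun _ => c).
Proof.
rewrite /MB; case: c.
  by rewrite (_ : [set _ | true] = setT) //; apply/seteqP; split.
by rewrite (_ : [set _ | false] = set0) //; apply/seteqP; split.
Qed.

Lemma MB_fun (b : Omega -> bool) (f : bool -> bool) : MB b -> MB (fun om => f (b om)).
Proof.
move=> mb; case Ht: (f true); case Hf: (f false).
- by apply: (MB_ext (a := fun _ => true)) ; [move=> om; case: (b om)| exact: MB_const].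
- apply: (MB_ext (a := b)) => // om; by case: (b om).
- rewrite /MB (_ : [set om | f (b om)] = ~` [set om | b om]); first exact: measurableC.
  by apply/seteqP; split => om /=; case: (b om); rewrite ?Ht ?Hf.
- by apply: (MB_ext (a := fun _ => false)) ; [move=> om; case: (b om)| exact: MB_const].
Qed.

Lemma MB_and (a b : Omega -> bool) : MB a -> MB b -> MB (fun om => a om && b om).
Proof.
move=> ma mb; rewrite /MB (_ : [set om | a om && b om] = [set om | a om] `&` [set om | b om]).
  exact: measurableI.
by apply/seteqP; split => om /= ; [move/andP|move=> [-> ->]].
Qed.

Lemma MB_or (a b : Omega -> bool) : MB a -> MB b -> MB (fun om => a om || b om).
Proof.
move=> ma mb; rewrite /MB (_ : [set om | a om || b om] = [set om | a om] `|` [set om | b om]).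
  exact: measurableU.
by apply/seteqP; split => om /= ; [move/orP|move=> [] ->; rewrite ?orbT].
Qed.

Lemma MB_all (I : Type) (s : seq I) (b : I -> Omega -> bool) :
  (forall i, MB (b i)) -> MB (fun om => all (fun i => b i om) s).
Proof.
move=> h; elim: s => [|i s IH] /=; first exact: MB_const.
exact: MB_and.
Qed.

Lemma MB_has (I : Type) (s : seq I) (b : I -> Omega -> bool) :
  (forall i, MB (b i)) -> MB (fun om => has (fun i => b i om) s).
Proof.
move=> h; elim: s => [|i s IH] /=; first exact: MB_const.
exact: MB_or.
Qed.

Lemma MB_ler (R : realType) (f g : Omega -> R) : measurable_fun setT f -> measurable_fun setT g ->
  MB (fun om => f om <= g om).
Proof.
move=> mf mg; have := measurable_realfun.measurable_fun_ler mf mg measurableT (Y := [set true]).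
rewrite setTI; move/(_ I).
rewrite /MB; congr measurable; apply/seteqP; split => om /=; by [].
Qed.
End Meas.
About det_main. About opt_ge0.
Local Open Scope classical_set_scope.
Lemma prob_inter d (Omega : measurableType d) (R : realType) (P : probability Omega R)
  (A B : set Omega) (x y : R) : measurable A -> measurable B ->
  (x%:E <= P A)%E -> (y%:E <= P B)%E -> ((x + y - 1)%:E <= P (A `&` B))%E.
Proof.
move=> mA mB hA hB.
have mI : measurable (A `&` B) by exact: measurableI.
have mU : measurable (A `|` B) by exact: measurableU.
have fA : P A = (fine (P A))%:E by rewrite fineK // fin_num_measure.
have fB : P B = (fine (P B))%:E by rewrite fineK // fin_num_measure.
have fI : P (A `&` B) = (fine (P (A `&` B)))%:E by rewrite fineK // fin_num_measure.
have fU : P (A `|` B) = (fine (P (A `|` B)))%:E by rewrite fineK // fin_num_measure.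
have fAo : (P A < +oo)%E by rewrite fA ltry.
have eU := measureUfinl (mu := P) mA mB fAo.
have le1 := @probability_le1 _ _ _ P _ mU.
have eU2 : fine (P (A `|` B)) = fine (P A) + fine (P B) - fine (P (A `&` B)).
  by apply: EFin_inj; rewrite EFinB EFinD -fA -fB -fI -fU; exact: eU.
have le1' : ((fine (P (A `|` B)))%:E <= 1)%E by rewrite -fU; exact: le1.
rewrite lee_fin in le1'.
rewrite fA lee_fin in hA; rewrite fB lee_fin in hB; rewrite fI lee_fin.
lra.
Qed.
Unset Implicit Arguments.
Theorem theorem4p2
  (R : realType) (V : finType) (m : nat)
  (src dst : 'I_m -> V) (time : 'I_m -> R)
  (k l : nat) (mx my : 'I_l -> 'I_k) (delta : R)
  (tau : {ffun 'I_l -> 'I_m} -> R)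
  (xi eps eta : R) (J : nat)
  (d : measure_display) (Omega : measurableType d) (P : probability Omega R)
  (F : nat -> set (set Omega))
  (est : Omega -> nat -> V -> R) (Out : Omega -> {set V}) :
  (* temporal network: positive, distinct timestamps *)
  (forall e, 0 < time e) -> injective time ->
  (* motif *)
  (2 <= k)%N -> (2 <= l)%N -> motif_weakly_connected mx my ->
  0 < delta ->
  (* weighting function *)
  (forall s, is_instance src dst time mx my delta s -> 0 < tau s) ->
  (* parameters *)
  0 < xi -> 0 < eps < 1 -> 0 < eta < 1 -> (1 <= J)%N ->
  (* filtration: F i = information available after iteration i *)
  (forall i, sigma_algebra setT (F i)) ->
  (forall i, F i `<=` measurable) ->
  (forall i, F i `<=` F i.+1) ->
  (forall i w (B : set R), measurable B -> F i [set om | B (est om i w)]) ->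
  (* estimates are nonnegative *)
  (forall om i w, (1 <= i <= J)%N ->
      w \in Wp k xi (est om) i -> 0 <= est om i w) ->
  (* conditional accuracy guarantee of each iteration *)
  (forall i, (1 <= i <= J)%N -> forall A, F i.-1 A ->
     ((1 - eta / J%:R)%:E * P A <=
        P ([set om | good_iter src dst time mx my delta tau xi eps (est om) i]
           `&` A))%E) ->
  (* Out om is an output of HybridPeel run with the estimates est om *)
  (forall om,
     is_output src dst time mx my delta tau xi J (est om) (Out om)) ->
  exists A : set Omega,
    [/\ measurable A, ((1 - eta)%:E <= P A)%E &
        forall om, A om ->
          (if (2 <= J)%N
           then (1 - eps) ^+ 2 / (k%:R * (1 + xi) * (1 + eps) ^+ 2)
           else (1 - eps) ^+ 2 / (k%:R * (1 + xi) * (1 + eps)))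
          * OPT src dst time mx my delta tau
          <= rho src dst time mx my delta tau (Out om)].
Proof.
move=> tpos tinj k2 l2 conn d0 taup xi0 /andP[e0 e1] /andP[eta0 eta1] J1 Fsig Fm Fmono Fest est0 Hcond Hout.
have l0 : (0 < l)%N by apply: leq_trans l2.
have k0 : (0 < k)%N by apply: leq_trans k2.
set G := fun i om => good_iter src dst time mx my delta tau xi eps (est om) i.
have mest : forall i w, measurable_fun setT (fun om => est om i w).
  by move=> i w _ B mB; rewrite setTI; apply: Fm; exact: Fest.
have msum : forall i (W : {set V}), measurable_fun setT (fun om => \sum_(u in W) est om i u).
  move=> i W; rewrite (_ : (fun om => _) = (fun om => \sum_(u <- index_enum V) (if u \in W then est om i u else 0))).
    by apply: measurable_sum => u; case: (u \in W); [exact: mest | exact: measurable_cst].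
  by apply: funext => om; rewrite big_mkcond.
have mWp : forall i (W : {set V}), MB (fun om => Wp k xi (est om) i == W).
  elim=> [|[|n] IH] W; try by apply: (MB_ext (a := fun _ => [set: V]%SET == W)); [move=> om | exact: MB_const].
  apply: (MB_ext (a := fun om => has (fun W' => (Wp k xi (est om) n.+1 == W') &&
           ((W' :\: Lset k xi W' (est om n.+1)) == W)) (enum {set V}))).
    move=> om; apply/hasP/eqP => [[W' _ /andP[/eqP <- /eqP <-]]//|<-].
    by exists (Wp k xi (est om) n.+1); rewrite ?mem_enum ?eqxx.
  apply: MB_has => W'; apply: MB_and; first exact: IH.
  apply: (MB_ext (a := fun om => all (fun w => (w \in W' :\: Lset k xi W' (est om n.+1)) == (w \in W)) (enum V))).
    move=> om; apply/allP/eqP => [h|->]; last by move=> w _.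
    by apply/setP => w; apply/eqP/h; rewrite mem_enum.
  apply: MB_all => w.
  apply: (MB_ext (a := fun om => (fun b => (~~ ((w \in W') && b) && (w \in W')) == (w \in W))
     (est om n.+1 w <= k%:R * (1 + xi) * tau_hat k W' (est om n.+1) / #|W'|%:R))).
    by move=> om; rewrite /Lset !inE.
  apply: (@MB_fun _ _ (fun om => est om n.+1 w <= k%:R * (1 + xi) * tau_hat k W' (est om n.+1) / #|W'|%:R)
     (fun b => (~~ ((w \in W') && b) && (w \in W')) == (w \in W))).
  apply: MB_ler; first exact: mest.
  rewrite /tau_hat (_ : (fun om => _) = (fun om => (k%:R * (1 + xi) * k%:R^-1 / #|W'|%:R) * \sum_(u in W') est om n.+1 u)).
    exact: measurable_realfun.measurable_funM (measurable_cst _) (msum _ _).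
  by apply: funext => om; rewrite mulrA mulrAC.
have mG : forall i, measurable [set om | G i om].
  move=> i.
  have : MB (fun om => has (fun W => (Wp k xi (est om) i == W) && all (fun w => (w \in W) ==>
      (`|est om i w - Cdeg src dst time mx my delta tau W w| <= eps * Cdeg src dst time mx my delta tau W w)) (enum V)) (enum {set V})).
    apply: MB_has => W; apply: MB_and; first exact: mWp.
    apply: MB_all => w.
    apply: (@MB_fun _ _ (fun om => `|est om i w - Cdeg src dst time mx my delta tau W w| <= eps * Cdeg src dst time mx my delta tau W w)
      (fun b => (w \in W) ==> b)).
    apply: MB_ler; last exact: measurable_cst.
    have h1 := measurable_realfun.measurable_funB (mest i w) (measurable_cst (Cdeg src dst time mx my delta tau W w)).
    have h2 := measurableT_comp (@measurable_realfun.normr_measurable R setT) h1.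
    exact: h2.
  rewrite /MB; congr measurable; apply/seteqP; split => om /=.
  - move/hasP => [W _ /andP[/eqP e /allP h]].
    rewrite /G /good_iter e => w wW; exact: (implyP (h w (mem_enum _ _)) wW).
  - move=> g; apply/hasP; exists (Wp k xi (est om) i); first by rewrite mem_enum.
    rewrite eqxx /=; apply/allP => w _; apply/implyP => wW; exact: g w wW.
have PG : forall i, (1 <= i <= J)%N -> ((1 - eta / J%:R)%:E <= P [set om | G i om])%E.
  move=> i hi; have hT : F i.-1 setT.
    by have [h0 hC _] := Fsig i.-1; have := hC _ h0; rewrite setD0.
  by have := Hcond i hi setT hT; rewrite probability_setT mule1 setIT.
set H := fun n => [set om | forall i, (1 <= i <= n)%N -> G i om].
have HH : forall n, (n <= J)%N -> measurable (H n) /\ ((1 - n%:R * (eta / J%:R))%:E <= P (H n))%E.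
  elim=> [|n IH] hn.
    rewrite (_ : H 0%N = setT); last by apply/seteqP; split => // om _ i /andP[i1 i2]; move: (leq_trans i1 i2).
    by split; [exact: measurableT | rewrite probability_setT mul0r subr0].
  have [mH pH] := IH (ltnW hn).
  have pG := PG n.+1 hn.
  rewrite (_ : H n.+1 = H n `&` [set om | G n.+1 om]); last first.
    apply/seteqP; split => om /=.
    + move=> h; split; last by apply: h; rewrite /= leqnn.
      by move=> i /andP[i1 i2]; apply: h; rewrite i1 (leqW i2).
    + move=> [h g] i /andP[i1]; rewrite leq_eqVlt => /orP[/eqP -> //|].
      by rewrite ltnS => i2; apply: h; rewrite i1 i2.
  split; first exact: measurableI.
  have := prob_inter mH (mG n.+1) pH pG.
  apply: le_trans; rewrite lee_fin -natr1; lra.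
have J0 : J%:R != 0 :> R by rewrite pnatr_eq0 -lt0n.
have [mHJ pHJ] := HH J (leqnn J).
exists (H J); split => //.
  by move: pHJ; rewrite mulrC divfK.
move=> om HJ.
have e01 : 0 < eps < 1 by rewrite e0 e1.
have dm := det_main (eps:=eps) taup l0 k0 xi0 e01 (fun i hi => HJ i hi) (Hout om).
apply: le_trans dm.
have o0 := opt_ge0 taup.
apply: ler_wpM2r => //.
have K0 : 0 < k%:R :> R by rewrite ltr0n.
have c0p : 0 <= (1 - eps) / (k%:R * (1 + xi) * (1 + eps)).
  apply: divr_ge0; first lra.
  by apply: mulr_ge0; [apply: mulr_ge0 |]; lra.
case: ifP => _.
  rewrite (_ : _ / _ = (1 - eps) / (k%:R * (1 + xi) * (1 + eps)) * ((1 - eps) / (1 + eps))); last first.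
    by field; rewrite !lt0r_neq0 //; lra.
  apply: ler_piMr => //; rewrite ?ler_pdivrMr ?divr_ge0; lra.
rewrite (_ : _ / _ = (1 - eps) / (k%:R * (1 + xi) * (1 + eps)) * (1 - eps)); last first.
  by field; rewrite !lt0r_neq0 //; lra.
apply: ler_piMr => //; lra.
Qed.
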